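(* Let $\mathbb{X}$ be a finite-dimensional Banach space and $n\in\mathbb{N}$. Let $T\in\mathbb{L}(\mathbb{X},\ell_\infty^n)$ with $\|T\|=1$. Then $T$ is $k$-smooth if and only if $M_{T^*}\cap\operatorname{Ext}(B_{\ell_1^n})=\{\pm e_1,\pm e_2,\ldots,\pm e_r\}$ for some $1\leq r\leq n$, $T^*e_i$ is $m_i$-smooth in $\mathbb{X}^*$ for each $1\leq i\leq r$, and $m_1+m_2+\cdots+m_r=k$.
   Context: The dual of $\ell_\infty^n$ is identified with $\ell_1^n$, so the adjoint is $T^*\in\mathbb{L}(\ell_1^n,\mathbb{X}^* )$; $e_1,\ldots,e_n$ is the standard basis of $\ell_1^n$. $B_{\ell_1^n}$ is the closed unit ball and $\operatorname{Ext}$ denotes its extreme points. For an operator $S$, $M_S=\{x:\|x\|=1,\ \|Sx\|=\|S\|\}$. For a Banach space $\mathbb{Z}$ and a unit vector $z$, $J(z)=\{f\in \mathbb{Z}^*:\|f\|=1,\ f(z)=1\}$; $z$ is $k$-smooth if $\dim\operatorname{span} J(z)=k$ (for $T$, in the space $\mathbb{L}(\mathbb{X},\ell_\infty^n)$ with operator norm). *)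

(* Defs.v *)
From HB Require Import structures.
From mathcomp Require Import all_boot all_order all_algebra.
From mathcomp Require Import mathcomp_extra boolp classical_sets reals.
Set Implicit Arguments. Unset Strict Implicit. Unset Printing Implicit Defensive.
Import Order.TTheory GRing.Theory Num.Theory.
Local Open Scope ring_scope.
Local Open Scope classical_set_scope.

(* Model: a finite-dimensional real Banach space X is (R^d, NX) (row vectors)
   with an arbitrary norm NX.  Linear functionals on a matrix space
   'M_(p,q) are represented by matrices through the pairing <F, A> =
   sum_{i,j} F i j * A i j; in particular X^* = ('rV_d, dual_norm NX),
   L(X, l_inf^n) = 'M_(d,n) acting by x |-> x *m T, and
   l_1^n = ('rV_n, l1norm), whose dual is l_inf^n. *)

Section Defs.
Variable R : realType.

Definition is_norm (V : lmodType R) (N : V -> R) : Prop :=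
  [/\ forall x, 0 <= N x,
      forall x, N x = 0 -> x = 0,
      forall (a : R) x, N (a *: x) = `|a| * N x &
      forall x y, N (x + y) <= N x + N y].

Definition pair (p q : nat) (F A : 'M[R]_(p, q)) : R :=
  \sum_(i < p) \sum_(j < q) F i j * A i j.

Definition opnorm (U V : Type) (N1 : U -> R) (N2 : V -> R) (f : U -> V) : R :=
  sup [set N2 (f x) | x in [set x | N1 x <= 1]].

Definition dual_norm (p q : nat) (N : 'M[R]_(p, q) -> R) (F : 'M[R]_(p, q)) : R :=
  opnorm N (fun r : R => `|r|) (pair F).

Definition linf_norm (n : nat) (v : 'rV[R]_n) : R := \big[Num.max/0]_(i < n) `|v 0 i|.
Definition l1_norm (n : nat) (v : 'rV[R]_n) : R := \sum_(i < n) `|v 0 i|.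

Definition Lnorm (d n : nat) (NX : 'rV[R]_d -> R) (T : 'M[R]_(d, n)) : R :=
  opnorm NX (@linf_norm n) (fun x => x *m T).

(* adjoint T^* : l_1^n -> X^*,  (T^* g)(x) = g(T x) *)
Definition adj (d n : nat) (T : 'M[R]_(d, n)) (g : 'rV[R]_n) : 'rV[R]_d := g *m T^T.

Definition Mset (U V : Type) (N1 : U -> R) (N2 : V -> R) (f : U -> V) : set U :=
  [set x | N1 x = 1 /\ N2 (f x) = opnorm N1 N2 f].

Definition Ext (V : lmodType R) (C : set V) : set V :=
  [set x | C x /\ forall (y z : V) (t : R), C y -> C z -> 0 < t < 1 ->
             x = t *: y + (1 - t) *: z -> y = x /\ z = x].

Definition ball_l1 (n : nat) : set 'rV[R]_n := [set v | l1_norm v <= 1].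

Definition Jset (p q : nat) (N : 'M[R]_(p, q) -> R) (z : 'M[R]_(p, q)) :
  set 'M[R]_(p, q) := [set F | dual_norm N F = 1 /\ pair F z = 1].

Definition dim_span (V : vectType R) (S : set V) (k : nat) : Prop :=
  exists s : seq V, (forall x, x \in s -> S x) /\
    (forall x, S x -> x \in <<s>>%VS) /\ \dim <<s>>%VS = k.

Definition k_smooth (p q : nat) (N : 'M[R]_(p, q) -> R) (z : 'M[R]_(p, q)) (k : nat)
  : Prop := N z = 1 /\ dim_span (Jset N z) k.

End Defs.

(* Main.v *)
Require Import Defs.
From HB Require Import structures.
From mathcomp Require Import all_boot all_order all_algebra.
From mathcomp Require Import mathcomp_extra boolp classical_sets reals.
From mathcomp Require Import topology normedtype derive.
From mathcomp Require Import ring lra.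
Import Order.TTheory GRing.Theory Num.Theory.
Import numFieldNormedType.Exports.
Local Open Scope ring_scope.
Local Open Scope classical_set_scope.
Set Implicit Arguments. Unset Strict Implicit. Unset Printing Implicit Defensive.


Section Gen.
Variable R : realType.

Definition mnorm (p q : nat) (A : 'M[R]_(p, q)) : R :=
  \big[Num.max/0]_(ij : 'I_p * 'I_q) `|A ij.1 ij.2|.

Lemma mnorm_ge0 p q (A : 'M[R]_(p, q)) : 0 <= mnorm A.
Proof. by rewrite /mnorm; elim/big_ind: _ => // x y hx hy; rewrite le_max hx. Qed.

Lemma mnorm_le p q (A : 'M[R]_(p, q)) i j : `|A i j| <= mnorm A.
Proof. exact: (le_bigmax 0 (fun ij : 'I_p * 'I_q => `|A ij.1 ij.2|) (i, j)). Qed.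

Lemma mnorm_leP p q (A : 'M[R]_(p, q)) B : 0 <= B ->
  (forall i j, `|A i j| <= B) -> mnorm A <= B.
Proof. by move=> B0 h; apply/bigmax_leP; split => // -[i j] _; apply: h. Qed.

Lemma pair_sym p q (F A : 'M[R]_(p, q)) : pair F A = pair A F.
Proof. by apply: eq_bigr => i _; apply: eq_bigr => j _; rewrite mulrC. Qed.

Lemma pairDr p q (F A B : 'M[R]_(p, q)) : pair F (A + B) = pair F A + pair F B.
Proof.
rewrite /pair -big_split /=; apply: eq_bigr => i _.
by rewrite -big_split; apply: eq_bigr => j _; rewrite mxE mulrDr.
Qed.

Lemma pairZr p q (F A : 'M[R]_(p, q)) a : pair F (a *: A) = a * pair F A.
Proof.
rewrite /pair mulr_sumr; apply: eq_bigr => i _; rewrite mulr_sumr.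
by apply: eq_bigr => j _; rewrite mxE mulrCA.
Qed.

Lemma pairDl p q (F G A : 'M[R]_(p, q)) : pair (F + G) A = pair F A + pair G A.
Proof. by rewrite pair_sym pairDr !(pair_sym A). Qed.

Lemma pairZl p q (F A : 'M[R]_(p, q)) a : pair (a *: F) A = a * pair F A.
Proof. by rewrite pair_sym pairZr pair_sym. Qed.

Lemma pair0r p q (F : 'M[R]_(p, q)) : pair F 0 = 0.
Proof. by rewrite -(scale0r 0) pairZr mul0r. Qed.

Lemma pair0l p q (F : 'M[R]_(p, q)) : pair 0 F = 0.
Proof. by rewrite pair_sym pair0r. Qed.

Lemma pairNr p q (F A : 'M[R]_(p, q)) : pair F (- A) = - pair F A.
Proof. by rewrite -scaleN1r pairZr mulN1r. Qed.

Lemma pair_delta p q (F : 'M[R]_(p, q)) i j : pair F (delta_mx i j) = F i j.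
Proof.
rewrite /pair (bigD1 i) //= [X in _ + X](_ : _ = 0) ?addr0; last first.
  apply: big1 => k /negbTE ki.
  by apply: big1 => l _; rewrite mxE ki mulr0.
rewrite (bigD1 j) //= [X in _ + X](_ : _ = 0) ?addr0; last first.
  by apply: big1 => l /negbTE lj; rewrite mxE lj andbF mulr0.
by rewrite mxE !eqxx mulr1.
Qed.

Lemma pair_bound p q (F A : 'M[R]_(p, q)) :
  `|pair F A| <= (\sum_i \sum_j `|F i j|) * mnorm A.
Proof.
apply: le_trans (ler_norm_sum _ _ _) _; rewrite mulr_suml; apply: ler_sum => i _.
apply: le_trans (ler_norm_sum _ _ _) _; rewrite mulr_suml; apply: ler_sum => j _.
by rewrite normrM ler_wpM2l // mnorm_le.
Qed.

Lemma normN0 (V : lmodType R) (N : V -> R) : is_norm N -> N 0 = 0.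
Proof. by case=> _ _ hZ _; rewrite -(scale0r (0:V)) hZ normr0 mul0r. Qed.

Lemma normN (V : lmodType R) (N : V -> R) x : is_norm N -> N (- x) = N x.
Proof. by case=> _ _ hZ _; rewrite -scaleN1r hZ normrN normr1 mul1r. Qed.

Lemma norm_sum (V : lmodType R) (N : V -> R) (I : Type) (s : seq I) (F : I -> V) :
  is_norm N -> N (\sum_(i <- s) F i) <= \sum_(i <- s) N (F i).
Proof.
move=> hN; elim: s => [|a s IH]; first by rewrite !big_nil normN0.
rewrite !big_cons; case: hN => _ _ _ hT.
by apply: le_trans (hT _ _) _; rewrite lerD2l.
Qed.

Section Dual.
Variables (p q : nat) (N : 'M[R]_(p, q) -> R).
Hypothesis hN : is_norm N.
Variable c : R.
Hypothesis c0 : 0 < c.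
Hypothesis hc : forall x, c * mnorm x <= N x.

Let E F := [set (fun r : R => `|r|) (pair F x) | x in [set x | N x <= 1]].

Lemma dual_hassup F : has_sup (E F).
Proof.
split; first by exists (`|pair F 0|), 0 => //=; rewrite normN0.
exists ((\sum_i \sum_j `|F i j|) / c) => _ [x /= Nx <-].
apply: le_trans (pair_bound _ _) _; rewrite ler_wpM2l //.
  by apply: sumr_ge0 => i _; apply: sumr_ge0 => j _.
by rewrite -(ler_pM2l c0) mulfV ?gt_eqF // (le_trans (hc x)).
Qed.

Lemma dual_ge F x : N x <= 1 -> `|pair F x| <= dual_norm N F.
Proof. by move=> hx; apply: (sup_upper_bound (dual_hassup F)); exists x. Qed.

Lemma dual_le F B : (forall x, N x <= 1 -> `|pair F x| <= B) -> dual_norm N F <= B.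
Proof.
move=> h; apply: ge_sup; first by exists (`|pair F 0|), 0 => //=; rewrite normN0.
by move=> _ [x /= Nx <-]; apply: h.
Qed.

Lemma dual_ge0 F : 0 <= dual_norm N F.
Proof.
have h := @dual_ge F 0; rewrite normN0 // in h.
exact: le_trans (normr_ge0 _) (h ler01).
Qed.

Lemma dual_pair F x : `|pair F x| <= dual_norm N F * N x.
Proof.
case: (hN) => hp hd hZ hT.
have [Nx0|Nx0] := eqVneq (N x) 0.
  by rewrite (hd _ Nx0) pair0r normr0 mulr_ge0 ?dual_ge0.
have Np : 0 < N x by rewrite lt_def Nx0 hp.
have := dual_ge F (x := (N x)^-1 *: x).
rewrite hZ pairZr normrM ger0_norm ?invr_ge0 ?hp // mulVf // lexx => /(_ isT).
by rewrite -ler_pdivlMl ?invr_gt0 // invrK mulrC.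
Qed.

Lemma dual_norm_is_norm : is_norm (dual_norm N).
Proof.
case: (hN) => hp hd hZ hT.
split.
- exact: dual_ge0.
- move=> F F0; apply/matrixP => i j; rewrite mxE.
  have := dual_pair F (delta_mx i j); rewrite F0 mul0r pair_delta.
  by rewrite normr_le0 => /eqP.
- move=> a F; apply/le_anti/andP; split.
    apply: dual_le => x Nx; rewrite pairZl normrM ler_wpM2l //.
    exact: dual_ge.
  have [->|a0] := eqVneq a 0.
    by rewrite normr0 mul0r dual_ge0.
  rewrite -ler_pdivlMl ?normr_gt0 //; apply: dual_le => x Nx.
  rewrite ler_pdivlMl ?normr_gt0 // -normrM -pairZl.
  exact: dual_ge.
- move=> F G; apply: dual_le => x Nx; rewrite pairDl.
  apply: le_trans (ler_normD _ _) _.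
  by apply: lerD; apply: dual_ge.
Qed.

Lemma dual_lower : exists2 c', 0 < c' & forall F, c' * mnorm F <= dual_norm N F.
Proof.
case: (hN) => hp hd hZ hT.
pose K := 1 + \sum_(ij : 'I_p * 'I_q) N (delta_mx ij.1 ij.2).
have K0 : 0 < K by rewrite ltr_pwDl // sumr_ge0.
exists K^-1; first by rewrite invr_gt0.
move=> F; rewrite mulrC ler_pdivrMr //.
apply: mnorm_leP; first by rewrite mulr_ge0 ?dual_ge0 ?ltW.
move=> i j; have := dual_pair F (delta_mx i j); rewrite pair_delta => h.
apply: le_trans h _; rewrite ler_wpM2l ?dual_ge0 //.
rewrite /K (bigD1 (i, j)) //=.
have : 0 <= \sum_(i0 | i0 != (i, j)) N (delta_mx i0.1 i0.2) by apply: sumr_ge0.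
lra.
Qed.

End Dual.
End Gen.


Section Lower.
Variable R : realType.

Lemma norm_upper d (N : 'rV[R]_d -> R) : is_norm N ->
  forall x : 'rV[R]_d, N x <= `|x| * \sum_(j < d) N (delta_mx 0 j).
Proof.
move=> hN x.
have ex : x = \sum_(j < d) x 0 j *: delta_mx 0 j.
  apply/rowP => j; rewrite summxE (bigD1 j) //= big1 ?addr0.
    by rewrite mxE mxE !eqxx mulr1.
  by move=> i /negbTE ij; rewrite !mxE eq_sym ij andbF mulr0.
rewrite {1}ex; apply: le_trans (norm_sum _ _ hN) _.
rewrite mulr_sumr; apply: ler_sum => j _.
case: (hN) => _ _ hZ _; rewrite hZ ler_wpM2r //; first by case: hN.
rewrite [leRHS]/Num.norm /= mx_normrE.
exact: (le_bigmax 0 (fun ij : 'I_1 * 'I_d => `|x ij.1 ij.2|) (ord0, j)).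
Qed.

Lemma norm_lower d (N : 'rV[R]_d -> R) : is_norm N ->
  exists2 c, 0 < c & forall x : 'rV[R]_d, c * `|x| <= N x.
Proof.
move=> hN; set C := \sum_(j < d) N (delta_mx 0 j).
have hU := norm_upper hN.
case: (hN) => hp hd hZ hT.
have Cge0 : 0 <= C by apply: sumr_ge0 => j _; apply: hp.
have lip : forall x y, N y - N x <= `|y - x| * C.
  move=> x y; rewrite lerBlDr; have := hT (y - x) x; rewrite subrK => h.
  by apply: le_trans h _; rewrite lerD2r; apply: hU.
have C1 : 0 < C + 1 by rewrite ltr_pwDr.
have cont : continuous N.
  move=> x; apply/(@cvgrPdist_lt _ _ _ _ (nbhs_filter x)) => e e0.
  have Cp : 0 < e / (C + 1) by rewrite divr_gt0.
  near=> y.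
  have : `|x - y| < e / (C + 1).
    near: y; rewrite nbhs_simpl /=. have := near_ball x _ Cp. apply: filterS => z. rewrite -ball_normE. done.
  rewrite ltr_pdivlMr // => hb.
  have l1 := lip x y; have l2 := lip y x.
  have h3 : `|x - y| * C <= `|x - y| * (C + 1) by rewrite ler_wpM2l // lerDl.
  rewrite distrC in l1.
  move: l1 l2 h3 hb; set a := `|x - y| * C; set b := `|x - y| * (C + 1).
  move=> l1 l2 h3 hb; rewrite ltr_norml; apply/andP; split; lra.
  Unshelve. all: try by end_near.
case: d N hN C hU hp hd hZ hT Cge0 lip C1 cont => [|d] N hN C hU hp hd hZ hT Cge0 lip C1 cont.
  exists 1 => // x; rewrite mul1r.
  have -> : x = 0 by apply/rowP => -[].
  by rewrite normr0 hp.
pose A := [set x : 'rV[R]_d.+1 | `|x| = 1].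
have v0 : (delta_mx 0 0 : 'rV[R]_d.+1) != 0.
  apply/eqP => /rowP /(_ 0); rewrite !mxE !eqxx /=; apply/eqP; exact: oner_neq0.
have A0 : A !=set0 by exists (`|(delta_mx 0 0 : 'rV[R]_d.+1)|^-1 *: (delta_mx 0 0 : 'rV[R]_d.+1)); rewrite /A /= normfZV.
have cA : compact A.
  apply: bounded_closed_compact.
    exists 1; split; first by rewrite num_real.
    by move=> M M1 x Ax /=; rewrite Ax ltW.
  have -> : A = Num.norm @^-1` [set 1] by [].
  apply: preimage_closed; last exact: closed_eq.
  by move=> x _; apply: norm_continuous.
have [c0 c0A minc] := EVT_min_rV A0 cA (continuous_subspaceT (A:=A) cont).
have c0n : `|c0| = 1 by move: c0A; rewrite inE.
have Nc0 : 0 < N c0.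
  rewrite lt_def hp andbT; apply/eqP => /hd c00.
  by move: c0n; rewrite c00 normr0 => /eqP; rewrite eq_sym oner_eq0.
exists (N c0) => // x.
have [->|x0] := eqVneq x 0; first by rewrite normr0 mulr0 hp.
have := minc (`|x|^-1 *: x); rewrite inE /A /= normfZV // => /(_ erefl).
rewrite hZ normrV ?unitfE ?normr_eq0 // normr_id => h.
have xp : 0 < `|x| by rewrite lt_def normr_ge0 andbT normr_eq0.
by rewrite -ler_pdivlMr // mulrC.
Qed.
End Lower.


Section L1.
Variables (R : realType) (n : nat).
Implicit Types (x y z : 'rV[R]_n).

Lemma l1_split x j : l1_norm x = `|x 0 j| + \sum_(i | i != j) `|x 0 i|.
Proof. by rewrite /l1_norm (bigD1 j). Qed.

Lemma l1_rest_ge0 x j : 0 <= \sum_(i | i != j) `|x 0 i|.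
Proof. by apply: sumr_ge0. Qed.

Lemma l1_ge x j : `|x 0 j| <= l1_norm x.
Proof. rewrite (l1_split x j); have := l1_rest_ge0 x j; lra. Qed.

Lemma l1_scale_delta a j : l1_norm (a *: (delta_mx 0 j : 'rV[R]_n)) = `|a|.
Proof.
rewrite (l1_split _ j) big1 ?addr0; first by rewrite !mxE !eqxx mulr1.
by move=> i /negbTE ij; rewrite !mxE ij andbF mulr0 normr0.
Qed.

Lemma l1_delta_eq y j a : `|a| = 1 -> l1_norm y <= 1 -> 1 <= a * y 0 j ->
  y = a *: delta_mx 0 j.
Proof.
move=> a1 hy hay.
have h1 : a * y 0 j <= `|y 0 j|.
  by apply: le_trans (ler_norm _) _; rewrite normrM a1 mul1r.
have := l1_split y j; have := l1_rest_ge0 y j => r0 hs.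
have rest0 : \sum_(i | i != j) `|y 0 i| = 0 by lra.
have aa : a * a = 1.
  have : `|a| ^+ 2 = 1 by rewrite a1 expr1n.
  by rewrite real_normK ?num_real // expr2.
have yj : y 0 j = a.
  have ay1 : a * y 0 j = 1 by lra.
  by rewrite -[y 0 j]mul1r -aa -mulrA ay1 mulr1.
apply/rowP => i; rewrite !mxE.
have [->|ij] := eqVneq i j; first by rewrite eqxx mulr1 yj.
rewrite andbF mulr0.
have := psumr_eq0P (fun i _ => normr_ge0 (y 0 i)) rest0 ij.
by move/eqP; rewrite normr_eq0 => /eqP.
Qed.

Lemma ext_delta j a : `|a| = 1 -> Ext (@ball_l1 R n) (a *: delta_mx 0 j).
Proof.
move=> a1; split; first by rewrite /ball_l1 /= l1_scale_delta a1.
move=> y z t hy hz /andP[t0 t1] e.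
have ej : a = t * y 0 j + (1 - t) * z 0 j.
  by move/rowP: e => /(_ j); rewrite !mxE !eqxx mulr1.
have aa : a * a = 1.
  have : `|a| ^+ 2 = 1 by rewrite a1 expr1n.
  by rewrite real_normK ?num_real // expr2.
have hu : a * y 0 j <= 1.
  apply: le_trans (ler_norm _) _; rewrite normrM a1 mul1r.
  exact: le_trans (l1_ge _ _) hy.
have hv : a * z 0 j <= 1.
  apply: le_trans (ler_norm _) _; rewrite normrM a1 mul1r.
  exact: le_trans (l1_ge _ _) hz.
have eq1 : 1 = t * (a * y 0 j) + (1 - t) * (a * z 0 j).
  have h : a * a = a * (t * y 0 j + (1 - t) * z 0 j) by rewrite -ej.
  by rewrite aa in h; rewrite {1}h; ring.
move: hu hv eq1; set u := a * y 0 j; set v := a * z 0 j => hu hv eq1.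
have u1 : 1 <= u by nra.
have v1 : 1 <= v by nra.
by split; apply: l1_delta_eq.
Qed.

Lemma ext_cases x : Ext (@ball_l1 R n) x -> l1_norm x = 1 ->
  exists j, x = delta_mx 0 j \/ x = - delta_mx 0 j.
Proof.
move=> [hb hext] x1.
have [j xj0] : exists j, x 0 j != 0.
  apply/not_existsP => h.
  move: x1; rewrite /l1_norm big1 => [/eqP|i _]; first by rewrite eq_sym oner_eq0.
  by have /negP := h i; rewrite negbK => /eqP ->; rewrite normr0.
pose a := Num.sg (x 0 j).
have a1 : `|a| = 1 by rewrite normr_sg xj0.
suff -> : x = a *: delta_mx 0 j.
  exists j; rewrite /a sgr_def xj0 mulr1n; case: (x 0 j < 0); rewrite ?expr1 ?expr0.
    by right; rewrite scaleN1r.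
  by left; rewrite scale1r.
have ax : a * x 0 j = `|x 0 j| by rewrite -normrEsg.
have hxj := l1_ge x j.
have [t1|tlt] := eqVneq `|x 0 j| 1.
  by apply: l1_delta_eq => //; rewrite ax t1.
have tl1 : `|x 0 j| < 1 by rewrite lt_neqAle tlt -x1 hxj.
pose t := `|x 0 j|.
have t0 : 0 < t by rewrite normr_gt0.
pose z := (1 - t)^-1 *: (x - x 0 j *: delta_mx 0 j).
have hz : l1_norm (x - x 0 j *: delta_mx 0 j) = 1 - t.
  rewrite (l1_split _ j) !mxE !eqxx mulr1 subrr normr0 add0r.
  have := l1_split x j; rewrite x1 => ->; rewrite /t [`|x 0 j| + _]addrC addrK.
  by apply: eq_bigr => i /negbTE ij; rewrite !mxE ij andbF mulr0 subr0.
have [] := hext (a *: delta_mx 0 j) z t.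
- by rewrite /ball_l1 /= l1_scale_delta a1.
- rewrite /ball_l1 /= /z /l1_norm.
  under eq_bigr do rewrite mxE normrM.
  rewrite -mulr_sumr -/(l1_norm _) hz ger0_norm; last by rewrite invr_ge0 subr_ge0 ltW.
  by rewrite mulVf // subr_eq0 eq_sym lt_eqF.
- by rewrite t0 tl1.
- have t1 : 1 - t != 0 by rewrite subr_eq0 eq_sym lt_eqF.
  rewrite /z scalerA [in X in _ + X]scalerA mulfV // scale1r.
  have -> : t * a = x 0 j by rewrite /t mulrC mulr_sg_norm.
  by rewrite addrC subrK.
by move=> -> _.
Qed.
End L1.


Section Main.
Variables (R : realType) (d n : nat) (NX : 'rV[R]_d -> R).
Hypothesis hN : is_norm NX.
Implicit Types (A F T : 'M[R]_(d, n)) (G x : 'rV[R]_d).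

Lemma NX_lower : exists2 c, 0 < c & forall x, c * mnorm x <= NX x.
Proof.
have [c c0 h] := norm_lower hN; exists c => // x.
by have := h x; rewrite [X in _ * X <= _]/Num.norm /= mx_normrE.
Qed.

Definition phi := dual_norm NX.
Definition phis := dual_norm phi.

Lemma phi_norm : is_norm phi.
Proof. by have [c c0 h] := NX_lower; apply: (dual_norm_is_norm hN c0 h). Qed.

Lemma phi_lower : exists2 c, 0 < c & forall x, c * mnorm x <= phi x.
Proof. by have [c c0 h] := NX_lower; apply: (dual_lower hN c0 h). Qed.

Lemma phis_norm : is_norm phis.
Proof. by have [c c0 h] := phi_lower; apply: (dual_norm_is_norm phi_norm c0 h). Qed.

Lemma phi_ge G x : NX x <= 1 -> `|pair G x| <= phi G.
Proof. by have [c c0 h] := NX_lower; apply: (dual_ge hN c0 h). Qed.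

Lemma phi_le G B : (forall x, NX x <= 1 -> `|pair G x| <= B) -> phi G <= B.
Proof. exact: dual_le. Qed.

Lemma phi_pair G x : `|pair G x| <= phi G * NX x.
Proof. by have [c c0 h] := NX_lower; apply: (dual_pair hN c0 h). Qed.

Lemma phis_ge G x : phi x <= 1 -> `|pair G x| <= phis G.
Proof. by have [c c0 h] := phi_lower; apply: (dual_ge phi_norm c0 h). Qed.

Lemma phis_pair G x : `|pair G x| <= phis G * phi x.
Proof. by have [c c0 h] := phi_lower; apply: (dual_pair phi_norm c0 h). Qed.

Lemma phi_ge0 G : 0 <= phi G. Proof. by case: phi_norm. Qed.
Lemma phis_ge0 G : 0 <= phis G. Proof. by case: phis_norm. Qed.

Definition colv (j : 'I_n) (A : 'M[R]_(d, n)) : 'rV[R]_d := \row_k A k j.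
Definition emb (j : 'I_n) (G : 'rV[R]_d) : 'M[R]_(d, n) :=
  \matrix_(k, l) ((l == j)%:R * G 0 k).

Fact colv_is_linear j : linear (colv j).
Proof. by move=> a A B; apply/rowP => k; rewrite !mxE. Qed.
HB.instance Definition _ j := GRing.isLinear.Build R 'M[R]_(d, n) 'rV[R]_d _ (colv j)
  (colv_is_linear j).

Fact emb_is_linear j : linear (emb j).
Proof. by move=> a A B; apply/matrixP => k l; rewrite !mxE mulrDr mulrCA. Qed.
HB.instance Definition _ j := GRing.isLinear.Build R 'rV[R]_d 'M[R]_(d, n) _ (emb j)
  (emb_is_linear j).

Lemma colv_emb j l G : colv l (emb j G) = if l == j then G else 0.
Proof.
apply/rowP => k; rewrite !mxE; case: eqP => _; first by rewrite mul1r.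
by rewrite mul0r mxE.
Qed.

Lemma emb_decomp F : F = \sum_j emb j (colv j F).
Proof.
apply/matrixP => k l; rewrite summxE (bigD1 l) //= big1 ?addr0.
  by rewrite !mxE eqxx mul1r.
by move=> j /negbTE lj; rewrite !mxE eq_sym lj mul0r.
Qed.

Lemma pair_rV (G x : 'rV[R]_d) : pair G x = \sum_k G 0 k * x 0 k.
Proof. by rewrite /pair big_ord1. Qed.

Lemma pair_col F A : pair F A = \sum_j pair (colv j F) (colv j A).
Proof.
rewrite /pair exchange_big /=; apply: eq_bigr => j _.
by rewrite big_ord1; apply: eq_bigr => k _; rewrite !mxE.
Qed.

Lemma mulmx_col (x : 'rV[R]_d) A j : (x *m A) 0 j = pair (colv j A) x.
Proof. by rewrite mxE pair_rV; apply: eq_bigr => k _; rewrite mxE mulrC. Qed.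

Lemma adj_delta T j : adj T (delta_mx 0 j) = colv j T.
Proof.
apply/rowP => k; rewrite /adj !mxE (bigD1 j) //= big1 ?addr0.
  by rewrite !mxE !eqxx mul1r.
by move=> i /negbTE ij; rewrite !mxE ij andbF mul0r.
Qed.

Lemma bigmax_ge0 (F : 'I_n -> R) : 0 <= \big[Num.max/0]_j F j.
Proof. by elim/big_rec: _ => // i x _ hx; rewrite le_max hx orbT. Qed.

Lemma Lset_hassup A :
  has_sup [set linf_norm (x *m A) | x in [set x | NX x <= 1]].
Proof.
split; first by exists (linf_norm (0 *m A)), 0 => //=; rewrite normN0.
exists (\big[Num.max/0]_j phi (colv j A)) => _ [x /= hx <-].
apply/bigmax_leP; split; first exact: bigmax_ge0.
move=> j _; rewrite mulmx_col; apply: le_trans (phi_ge _ hx) _.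
exact: (le_bigmax 0 (fun j : 'I_n => phi (colv j A)) j).
Qed.

Lemma Lnorm_eq A : Lnorm NX A = \big[Num.max/0]_j phi (colv j A).
Proof.
apply/le_anti/andP; split.
  apply: ge_sup; first by exists (linf_norm (0 *m A)), 0 => //=; rewrite normN0.
  move=> _ [x /= hx <-].
  apply/bigmax_leP; split; first exact: bigmax_ge0.
  move=> j _; rewrite mulmx_col; apply: le_trans (phi_ge _ hx) _.
  exact: (le_bigmax 0 (fun j : 'I_n => phi (colv j A)) j).
have ub : forall x, NX x <= 1 -> linf_norm (x *m A) <= Lnorm NX A.
  by move=> x hx; apply: (sup_upper_bound (Lset_hassup A)); exists x.
apply/bigmax_leP; split.
  apply: le_trans (ub 0 _); last by rewrite normN0.
  exact: bigmax_ge0.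
move=> j _; apply: phi_le => x hx; rewrite -mulmx_col.
apply: le_trans (ub x hx).
exact: (le_bigmax 0 (fun j : 'I_n => `|(x *m A) 0 j|) j).
Qed.

Lemma Lnorm_col A j : phi (colv j A) <= Lnorm NX A.
Proof. by rewrite Lnorm_eq; exact: (le_bigmax 0 (fun j : 'I_n => phi (colv j A)) j). Qed.

Lemma Lnorm_norm : is_norm (Lnorm NX : 'M[R]_(d, n) -> R).
Proof.
have [hp hd hZ hT] := phi_norm.
split.
- by move=> A; rewrite Lnorm_eq bigmax_ge0.
- move=> A; rewrite Lnorm_eq => h; apply/matrixP => k j.
  have : phi (colv j A) = 0.
    apply/le_anti; rewrite hp andbT -h.
    exact: (le_bigmax 0 (fun j : 'I_n => phi (colv j A)) j).
  by move/hd/rowP/(_ k); rewrite !mxE.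
- move=> a A; rewrite !Lnorm_eq; apply/le_anti/andP; split.
    apply/bigmax_leP; split; first by rewrite mulr_ge0 ?bigmax_ge0.
    move=> j _; rewrite linearZ hZ ler_wpM2l //.
    exact: (le_bigmax 0 (fun j : 'I_n => phi (colv j A)) j).
  have [->|a0] := eqVneq a 0; first by rewrite normr0 mul0r bigmax_ge0.
  rewrite -ler_pdivlMl ?normr_gt0 //.
  apply/bigmax_leP; split; first by rewrite mulr_ge0 ?invr_ge0 ?bigmax_ge0.
  move=> j _; rewrite ler_pdivlMl ?normr_gt0 // -hZ -linearZ.
  exact: (le_bigmax 0 (fun j : 'I_n => phi (colv j (a *: A))) j).
- move=> A B; rewrite !Lnorm_eq; apply/bigmax_leP; split.
    by rewrite addr_ge0 ?bigmax_ge0.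
  move=> j _; rewrite linearD; apply: le_trans (hT _ _) _; apply: lerD.
    exact: (le_bigmax 0 (fun j : 'I_n => phi (colv j A)) j).
  exact: (le_bigmax 0 (fun j : 'I_n => phi (colv j B)) j).
Qed.

Lemma Lnorm_lower : exists2 c, 0 < c & forall A, c * mnorm A <= Lnorm NX A.
Proof.
have [c c0 h] := phi_lower; exists c => // A.
rewrite -ler_pdivlMl //; apply: mnorm_leP.
  have [hp _ _ _] := Lnorm_norm.
  by rewrite mulr_ge0 ?invr_ge0 ?(ltW c0) ?hp.
move=> k j; rewrite ler_pdivlMl //; apply: le_trans (Lnorm_col A j).
apply: le_trans (h _); rewrite ler_wpM2l ?(ltW c0) //.
by have := mnorm_le (colv j A) 0 k; rewrite mxE.
Qed.


Lemma dualL_ge F A : Lnorm NX A <= 1 -> `|pair F A| <= dual_norm (Lnorm NX) F.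
Proof. by have [c c0 h] := Lnorm_lower; apply: (dual_ge Lnorm_norm c0 h). Qed.

Lemma dualL_eq F : dual_norm (Lnorm NX) F = \sum_j phis (colv j F).
Proof.
apply/le_anti/andP; split.
  apply: (dual_le Lnorm_norm) => A hA; rewrite pair_col.
  apply: le_trans (ler_norm_sum _ _ _) _; apply: ler_sum => j _.
  apply: le_trans (phis_pair _ _) _.
  rewrite -[X in _ <= X]mulr1 ler_wpM2l ?phis_ge0 //.
  exact: le_trans (Lnorm_col A j) hA.
apply/ler_addgt0Pr => e e0.
have n1 : 0 < n%:R + 1 :> R by rewrite ltr_pwDr // ler0n.
pose eps := e / (n%:R + 1).
have eps0 : 0 < eps by rewrite divr_gt0.
have hB : forall j, exists B : 'rV[R]_d,
    phi B <= 1 /\ phis (colv j F) - eps <= pair (colv j F) B.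
  move=> j; have [c c0 h] := phi_lower.
  have hs := dual_hassup phi_norm c0 h (colv j F).
  have [_ [x /= hx <-] hlt] := sup_adherent eps0 hs.
  exists (Num.sg (pair (colv j F) x) *: x); split.
    have [hp _ hZ _] := phi_norm; rewrite hZ normr_sg.
    by case: (_ != 0); rewrite ?mul1r ?mul0r.
  by rewrite pairZr -normrEsg; apply: ltW.
have [B hBj] := fin_all_exists hB.
pose M : 'M[R]_(d, n) := \matrix_(k, j) B j 0 k.
have cM : forall j, colv j M = B j by move=> j; apply/rowP => k; rewrite !mxE.
have LM : Lnorm NX M <= 1.
  rewrite Lnorm_eq; apply/bigmax_leP; split => // j _.
  by rewrite cM; case: (hBj j).
have := dualL_ge F LM; rewrite pair_col => h.
have h2 : \sum_j (phis (colv j F) - eps) <= \sum_j pair (colv j F) (colv j M).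
  by apply: ler_sum => j _; rewrite cM; case: (hBj j).
rewrite sumrB sumr_const card_ord -mulr_natl in h2.
have h3 : n%:R * eps <= e.
  rewrite /eps mulrA ler_pdivrMr // mulrDr mulr1 mulrC lerDl ltW //.
have h4 := ler_norm (\sum_j pair (colv j F) (colv j M)).
lra.
Qed.


Lemma J_emb T j G : Jset phi (colv j T) G -> Jset (Lnorm NX) T (emb j G).
Proof.
move=> [hG1 hG2]; split.
  rewrite dualL_eq (bigD1 j) //= colv_emb eqxx big1 ?addr0 //.
  by move=> l /negbTE lj; rewrite colv_emb lj normN0 //; apply: phis_norm.
rewrite pair_col (bigD1 j) //= colv_emb eqxx big1 ?addr0 //.
by move=> l /negbTE lj; rewrite colv_emb lj pair0l.
Qed.

Lemma J_col T F j : Lnorm NX T = 1 -> Jset (Lnorm NX) T F -> colv j F != 0 ->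
  (phi (colv j T) = 1) /\ Jset phi (colv j T) ((phis (colv j F))^-1 *: colv j F).
Proof.
move=> hT [hF1 hF2] Fj0.
have [hp hd hZ _] := phis_norm.
have fle : forall l, phi (colv l T) <= 1 by move=> l; rewrite -hT Lnorm_col.
have gle : forall l, pair (colv l F) (colv l T) <= phis (colv l F).
  move=> l; apply: le_trans (ler_norm _) _; apply: le_trans (phis_pair _ _) _.
  by rewrite -[X in _ <= X]mulr1 ler_wpM2l ?hp ?fle.
have hsum : \sum_l (phis (colv l F) - pair (colv l F) (colv l T)) = 0.
  by rewrite sumrB -dualL_eq -pair_col hF1 hF2 subrr.
have hge : forall l : 'I_n, true -> 0 <= phis (colv l F) - pair (colv l F) (colv l T).
  by move=> l _; rewrite subr_ge0 gle.
have := psumr_eq0P hge hsum (i := j) isT.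
move/eqP; rewrite subr_eq0 => /eqP hj.
set a := phis (colv j F) in hj *.
have a0 : 0 < a by rewrite lt_def hp andbT; apply/eqP => /hd; apply/eqP.
have h1 : a <= a * phi (colv j T).
  rewrite [X in X <= _]hj; apply: le_trans (ler_norm _) _; exact: phis_pair.
have f1 : phi (colv j T) = 1.
  apply/le_anti; rewrite fle /=.
  by rewrite -(ler_pM2l a0) mulr1.
split => //; split.
  rewrite /phis in hZ *; by rewrite hZ ger0_norm ?invr_ge0 ?hp // mulVf // gt_eqF.
by rewrite pairZl -hj mulVf // gt_eqF.
Qed.

Definition Usum (S : pred 'I_n) (V : 'I_n -> {vspace 'rV[R]_d}) : {vspace 'M[R]_(d, n)} :=
  (\sum_(j | S j) (linfun (emb j) @: V j))%VS.

Lemma J_sub T (V : 'I_n -> {vspace 'rV[R]_d}) F : Lnorm NX T = 1 ->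
  (forall j, phi (colv j T) = 1 -> forall G, Jset phi (colv j T) G -> G \in V j) ->
  Jset (Lnorm NX) T F -> F \in Usum (fun j => phi (colv j T) == 1) V.
Proof.
move=> hT hV hF; rewrite (emb_decomp F) (bigID (fun j => phi (colv j T) == 1)) /=.
rewrite [X in _ + X]big1 ?addr0; last first.
  move=> j /negP hj; have [->|Fj0] := eqVneq (colv j F) 0; first by rewrite linear0.
  by case: hj; have [-> _] := J_col hT hF Fj0.
apply: memv_sumr => j /eqP hj; rewrite -lfunE /=; apply: memv_img.
have [->|Fj0] := eqVneq (colv j F) 0; first exact: mem0v.
have [_ hJ] := J_col hT hF Fj0.
have [hp hd hZ _] := phis_norm.
have a0 : phis (colv j F) != 0 by apply: contra_neq (@hd _) Fj0.
rewrite -(scalerKV a0 (colv j F)); apply: memvZ; exact: hV.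
Qed.

Lemma emb_inj j : injective (emb j).
Proof. by move=> G1 G2 /(congr1 (colv j)); rewrite !colv_emb eqxx. Qed.

Lemma dim_main (S : pred 'I_n) (V : 'I_n -> {vspace 'rV[R]_d}) (s : seq 'M[R]_(d, n)) :
  (forall y : 'M[R]_(d, n), y \in s -> y \in Usum S V) ->
  (forall j, S j -> forall G, G \in V j -> emb j G \in <<s>>%VS) ->
  <<s>>%VS = Usum S V /\ \dim <<s>>%VS = (\sum_(j | S j) \dim (V j))%N.
Proof.
move=> h1 h2.
have eqU : <<s>>%VS = Usum S V.
  apply/eqP; rewrite eqEsubv; apply/andP; split.
    by apply/span_subvP => x /h1.
  apply/subv_sumP => j Sj; apply/subvP => _ /memv_imgP [G GV ->].
  by rewrite lfunE /=; apply: h2.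
split => //; rewrite eqU.
have dx : directv (Usum S V).
  apply/directv_sum_independent => us hus hsum i Si.
  have hemb : forall j, S j -> us j = emb j (colv j (us j)).
    move=> j Sj; have /memv_imgP [G _ ->] := hus j Sj.
    by rewrite lfunE /= colv_emb eqxx.
  have := congr1 (colv i) hsum; rewrite linear_sum linear0 (bigD1 i) //=.
  rewrite big1 ?addr0 => [hi|j /andP [Sj ji]]; last first.
    by rewrite hemb // colv_emb eq_sym (negbTE ji).
  by rewrite hemb // hi linear0.
rewrite /Usum; have /directvP -> := dx; apply: eq_bigr => j _.
apply: limg_dim_eq; apply/eqP; rewrite -subv0; apply/subvP => G.
rewrite memv_cap memv_ker lfunE /= => /andP [_ /eqP h].
rewrite memv0; apply/eqP; apply: (@emb_inj j); rewrite h.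
by apply/matrixP => k l; rewrite !mxE mulr0.
Qed.


Lemma exists_S T : Lnorm NX T = 1 -> exists j, phi (colv j T) = 1.
Proof.
move=> hT; apply: contrapT => h.
have : Lnorm NX T < 1.
  rewrite Lnorm_eq; apply/bigmax_ltP; split => // j _.
  rewrite lt_neqAle (le_trans (Lnorm_col T j)) ?hT // andbT; apply/eqP => e; apply: h.
  by exists j.
by rewrite hT ltxx.
Qed.

Lemma adj_sum T (g : 'rV[R]_n) : adj T g = \sum_j g 0 j *: colv j T.
Proof.
apply/rowP => k; rewrite /adj !mxE summxE; apply: eq_bigr => j _.
by rewrite !mxE.
Qed.

Lemma phi_adj_le T (g : 'rV[R]_n) : Lnorm NX T = 1 -> phi (adj T g) <= l1_norm g.
Proof.
move=> hT; have [hp hd hZ hTr] := phi_norm.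
rewrite adj_sum; apply: le_trans (norm_sum _ _ phi_norm) _.
rewrite /l1_norm; apply: ler_sum => j _; rewrite hZ.
by rewrite -[X in _ <= X]mulr1 ler_wpM2l // -hT Lnorm_col.
Qed.

Lemma opnorm_adj T : Lnorm NX T = 1 -> opnorm (@l1_norm R n) phi (adj T) = 1.
Proof.
move=> hT.
have ne : [set phi (adj T g) | g in [set g | l1_norm g <= 1]] !=set0.
  by exists (phi (adj T 0)), 0 => //=; rewrite /l1_norm big1 // => j _; rewrite mxE normr0.
have ub : ubound [set phi (adj T g) | g in [set g | l1_norm g <= 1]] 1.
  by move=> _ [g /= hg <-]; apply: le_trans (phi_adj_le g hT) hg.
apply/le_anti/andP; split; first exact: ge_sup.
have [j hj] := exists_S hT.
apply: (sup_upper_bound (conj ne (ex_intro _ 1 ub))).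
exists (delta_mx 0 j); last by rewrite adj_delta.
by rewrite /= -[delta_mx _ _]scale1r l1_scale_delta normr1.
Qed.

Lemma delta_pm_inj (i j : 'I_n) :
  (delta_mx 0 j : 'rV[R]_n) = delta_mx 0 i \/ (delta_mx 0 j : 'rV[R]_n) = - delta_mx 0 i -> j = i.
Proof.
move=> h; apply/eqP; case: (boolP (j == i)) => // /negbTE ji.
case: h => /rowP /(_ j); rewrite !mxE !eqxx ji /= => /eqP.
  by rewrite oner_eq0.
by rewrite oppr0 oner_eq0.
Qed.

Lemma MsetExt T : Lnorm NX T = 1 ->
  Mset (@l1_norm R n) (dual_norm NX) (adj T) `&` Ext (@ball_l1 R n)
  = [set g | exists2 i, phi (colv i T) == 1 & (g = delta_mx 0 i \/ g = - delta_mx 0 i)].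
Proof.
move=> hT; have hop := opnorm_adj hT.
apply/seteqP; split => g.
  move=> [[g1 hg] hext].
  have [j hj] := ext_cases hext g1.
  exists j => //; apply/eqP; move: hg; rewrite -/phi hop.
  case: hj => ->; rewrite ?adj_delta //.
  by rewrite /adj mulNmx -/(adj T _) adj_delta normN //; apply: phi_norm.
move=> [i /eqP hi hg]; split.
  split.
    case: hg => ->.
      by rewrite -[delta_mx _ _]scale1r l1_scale_delta normr1.
    by rewrite -scaleN1r l1_scale_delta normrN normr1.
  rewrite -/phi hop; case: hg => ->; rewrite ?adj_delta //.
  by rewrite /adj mulNmx -/(adj T _) adj_delta normN //; apply: phi_norm.
case: hg => ->.
  by rewrite -[delta_mx _ _]scale1r; apply: ext_delta; rewrite normr1.
by rewrite -scaleN1r; apply: ext_delta; rewrite normrN normr1.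
Qed.

End Main.


Section Final.
Variables (R : realType) (d n : nat) (NX : 'rV[R]_d -> R).
Hypothesis hN : is_norm NX.

Lemma main_thm (T : 'M[R]_(d, n)) (k : nat) : Lnorm NX T = 1 ->
  (k_smooth (Lnorm NX) T k <->
   exists S : pred 'I_n,
     (exists i, S i) /\
     Mset (@l1_norm R n) (dual_norm NX) (adj T) `&` Ext (@ball_l1 R n)
       = [set g | exists2 i, S i & (g = delta_mx 0 i \/ g = - delta_mx 0 i)] /\
     exists m : 'I_n -> nat,
       (forall i, S i -> k_smooth (dual_norm NX) (adj T (delta_mx 0 i)) (m i)) /\
       (\sum_(i < n | S i) m i)%N = k).
Proof.
move=> hT; split.
- move=> [_ [s [hs1 [hs2 hs3]]]].
  pose S : pred 'I_n := fun j => phi NX (colv j T) == 1.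
  pose sj j := [seq (phis NX (colv j F))^-1 *: colv j F | F <- s & colv j F != 0].
  have sj_in : forall j G, G \in sj j -> Jset (phi NX) (colv j T) G.
    move=> j G /mapP [F]; rewrite mem_filter => /andP [Fj0 Fs] ->.
    by have [_ h] := J_col hN hT (hs1 _ Fs) Fj0.
  have sj_span : forall j G, Jset (phi NX) (colv j T) G -> G \in <<sj j>>%VS.
    move=> j G hG.
    have h1 : emb j G \in <<s>>%VS by apply: hs2; apply: J_emb.
    have : linfun (colv j) (emb j G) \in (linfun (colv j) @: <<s>>)%VS by apply: memv_img.
    rewrite lfunE /= colv_emb eqxx limg_span => hG'.
    apply: (subvP _ _ hG'); apply/span_subvP => _ /mapP [F Fs ->].
    rewrite lfunE /=.
    have [->|Fj0] := eqVneq (colv j F) 0; first exact: mem0v.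
    have [hp hd hZ _] := phis_norm hN.
    have a0 : phis NX (colv j F) != 0 by apply: contra_neq (@hd _) Fj0.
    rewrite -(scalerKV a0 (colv j F)); apply: memvZ; apply: memv_span.
    by apply/mapP; exists F => //; rewrite mem_filter Fj0.
  have h2 : forall j, S j -> forall G, G \in <<sj j>>%VS -> emb j G \in <<s>>%VS.
    move=> j _ G hG.
    have : linfun (emb j) G \in (linfun (emb j) @: <<sj j>>)%VS by apply: memv_img.
    rewrite lfunE /= limg_span => h.
    apply: (subvP _ _ h); apply/span_subvP => _ /mapP [H Hs ->]; rewrite lfunE /=.
    by apply: hs2; apply: (J_emb hN); apply: sj_in.
  have [eqU hdim] := dim_main (S := S) (V := fun j => <<sj j>>%VS) (s := s)
    (fun y ys => J_sub hN hT (fun j _ G hG => sj_span j G hG) (hs1 y ys))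
    h2.
  exists S; split; first by have [j hj] := exists_S hN hT; exists j; apply/eqP.
  split; first exact: MsetExt.
  exists (fun j => \dim <<sj j>>%VS); split; last by rewrite -hs3 hdim.
  move=> i Si; rewrite adj_delta; split; first exact/eqP.
  by exists (sj i); split; [exact: sj_in | split; [exact: sj_span|]].
- move=> [S [[i0 Si0] [hset [m [hm hsum]]]]].
  have hS : forall j, S j = (phi NX (colv j T) == 1).
    move=> j; have E := MsetExt hN hT; rewrite hset in E.
    move/seteqP: E => [E1 E2].
    apply/idP/idP => h.
      have [] := E1 (delta_mx 0 j); first by exists j => //; left.
      by move=> i hi /delta_pm_inj ->.
    have [] := E2 (delta_mx 0 j); first by exists j => //; left.
    by move=> i hi /delta_pm_inj ->.
  have hsj : forall j, exists sj : seq 'rV[R]_d, S j ->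
      [/\ forall x, x \in sj -> Jset (phi NX) (colv j T) x,
          forall x, Jset (phi NX) (colv j T) x -> x \in <<sj>>%VS
        & \dim <<sj>>%VS = m j].
    move=> j; case: (boolP (S j)) => Sj; last by exists [::].
    have [_ [sj [h1 [h2 h3]]]] := hm j Sj; exists sj => _.
    by rewrite adj_delta in h1 h2; split.
  have [sj hsj'] := fin_all_exists hsj.
  pose s := flatten [seq map (emb j) (sj j) | j <- enum S].
  have s_in : forall y, y \in s -> exists2 j, S j & exists2 z, z \in sj j & y = emb j z.
    move=> y /flatten_mapP [j]; rewrite mem_enum => Sj /mapP [z zs ->].
    by exists j => //; exists z.
  have eqS : Usum S (fun j => <<sj j>>%VS) =
      Usum (fun j => phi NX (colv j T) == 1) (fun j => <<sj j>>%VS).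
    by rewrite /Usum; apply: eq_bigl => j; rewrite hS.
  have h1 : forall y, y \in s -> y \in Usum S (fun j => <<sj j>>%VS).
    move=> y /s_in [j Sj [z zs ->]]; rewrite /Usum.
    apply: (subvP (sumv_sup j Sj (subvv _))).
    rewrite -[emb j z](lfunE (emb j)); apply: memv_img; exact: memv_span.
  have h2 : forall j, S j -> forall G, G \in <<sj j>>%VS -> emb j G \in <<s>>%VS.
    move=> j Sj G hG.
    have : linfun (emb j) G \in (linfun (emb j) @: <<sj j>>)%VS by apply: memv_img.
    rewrite lfunE /= limg_span => h.
    apply: (subvP _ _ h); apply/span_subvP => _ /mapP [H Hs ->]; rewrite lfunE /=.
    apply: memv_span; apply/flatten_mapP; exists j; first by rewrite mem_enum.
    exact: map_f.
  have [eqU hdim] := dim_main (S := S) (V := fun j => <<sj j>>%VS) (s := s) h1 h2.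
  split; first exact: hT.
  exists s; split.
    move=> y /s_in [j Sj [z zs ->]]; apply: (J_emb hN).
    by have [h _ _] := hsj' j Sj; apply: h.
  split.
    move=> y hy; rewrite eqU eqS; apply: (J_sub hN hT) hy => j hj G hG.
    have Sj : S j by rewrite hS hj eqxx.
    by have [_ h _] := hsj' j Sj; apply: h.
  rewrite hdim -hsum; apply: eq_bigr => j Sj.
  by have [_ _ h] := hsj' j Sj.
Qed.
End Final.

Theorem corollary3p8 (R : realType) (d n : nat) (NX : 'rV[R]_d -> R)
    (T : 'M[R]_(d, n)) (k : nat) :
  is_norm NX -> Lnorm NX T = 1 ->
  (k_smooth (Lnorm NX) T k <->
   exists S : pred 'I_n,
     (exists i, S i) /\
     Mset (@l1_norm R n) (dual_norm NX) (adj T) `&` Ext (@ball_l1 R n)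
       = [set g | exists2 i, S i & (g = delta_mx 0 i \/ g = - delta_mx 0 i)] /\
     exists m : 'I_n -> nat,
       (forall i, S i -> k_smooth (dual_norm NX) (adj T (delta_mx 0 i)) (m i)) /\
       (\sum_(i < n | S i) m i)%N = k).
Proof. by move=> hN hT; apply: main_thm. Qed.
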